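(* Let $\epsilon\in(0,1)$, $u_0\in\mathbb{R}$, and $h^*=\epsilon^2$. For every $h\in(0,h^*]$, let $(u_n)_{n\ge0}$ be a sequence of real numbers starting at $u_0$ and satisfying the implicit Euler scheme $$\frac{u_n-u_{n-1}}{h}+\frac{1}{\epsilon^2}\big(u_n^3-u_n\big)=0,\qquad n\ge 1.$$ Then: (i) if $u_0\in\{0,1,-1\}$, then $u_n=\mathrm{sign}(u_0)$ for all $n\ge1$; (ii) if $u_0\notin\{0,1,-1\}$, then $(u_n)$ is monotone and converges to $\mathrm{sign}(u_0)$ as $n\to\infty$.
   Context: The scheme discretizes the ODE $u'(t)+\frac{1}{\epsilon^2}(u^3-u)=0$, $u(0)=u_0$. For $h\le\epsilon^2$ each step equation has a unique real solution $u_n$, so the sequence is uniquely determined. Here $\mathrm{sign}(0)=0$. *)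

(* Defs.v *)
From Stdlib Require Import Reals.
Open Scope R_scope.

Definition sign (x : R) : R :=
  if Rlt_dec 0 x then 1 else if Rlt_dec x 0 then -1 else 0.

Definition monotone_seq (u : nat -> R) : Prop :=
  (forall n, u n <= u (S n)) \/ (forall n, u (S n) <= u n).

(* Main.v *)
Require Import Defs.
From Stdlib Require Import Reals Lra Lia Psatz.
Open Scope R_scope.

Definition gg (r x : R) := x + r * (x ^ 3 - x).

Lemma gg_mono r x y : 0 < r <= 1 -> x < y -> gg r x < gg r y.
Proof.
  intros Hr Hxy. unfold gg.
  assert (Hq : 0 < x*x + x*y + y*y).
  { destruct (Req_dec y 0) as [->|Hy]; [nra|].
    assert (0 < y*y) by nra. nra. }
  assert (gg r y - gg r x = (y - x) * ((1 - r) + r * (x*x + x*y + y*y))) by (unfold gg; ring).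
  unfold gg in H. assert (0 < (y - x) * ((1 - r) + r * (x*x + x*y + y*y))).
  { apply Rmult_lt_0_compat; nra. }
  lra.
Qed.

Lemma gg_rev r x y : 0 < r <= 1 -> gg r x < gg r y -> x < y.
Proof.
  intros Hr H. destruct (Rlt_le_dec x y) as [|Hle]; auto.
  destruct (Rle_lt_or_eq_dec _ _ Hle) as [Hl|He].
  - pose proof (gg_mono r y x Hr Hl). lra.
  - subst. lra.
Qed.

Lemma gg_inj r x y : 0 < r <= 1 -> gg r x = gg r y -> x = y.
Proof.
  intros Hr H. destruct (Rtotal_order x y) as [Hl|[He|Hl]]; auto.
  - pose proof (gg_mono r x y Hr Hl). lra.
  - pose proof (gg_mono r y x Hr Hl). lra.
Qed.

Lemma geo_cv (v : nat -> R) l K q : 0 <= K -> 0 < q < 1 ->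
  (forall n, Rabs (v n - l) <= K * q ^ n) -> Un_cv v l.
Proof.
  intros HK Hq Hb e He.
  assert (Rabs q < 1) by (rewrite Rabs_right; lra).
  destruct (pow_lt_1_zero q H (e / (K + 1))) as [N HN].
  { apply Rdiv_lt_0_compat; lra. }
  exists N. intros n Hn. unfold R_dist.
  specialize (HN n Hn). specialize (Hb n).
  rewrite Rabs_right in HN by (apply Rle_ge, pow_le; lra).
  assert (0 <= q ^ n) by (apply pow_le; lra).
  assert (q ^ n * (K + 1) < e).
  { apply (Rmult_lt_compat_r (K+1)) in HN; [|lra].
    unfold Rdiv in HN. rewrite Rmult_assoc, Rinv_l in HN; lra. }
  nra.
Qed.

Lemma core (v : nat -> R) r : 0 < r <= 1 ->
  (forall n, v n = gg r (v (S n))) -> 0 < v 0%nat -> v 0%nat <> 1 ->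
  monotone_seq v /\ Un_cv v 1.
Proof.
  intros Hr Hrec H0 H1.
  destruct (Rlt_le_dec 1 (v 0%nat)) as [Hg|Hl].
  - assert (Hinv : forall n, 1 < v n).
    { induction n; auto. apply (gg_rev r); auto. rewrite <- Hrec.
      unfold gg; lra. }
    assert (Hdec : forall n, v (S n) <= v n).
    { intro n. rewrite (Hrec n). unfold gg. specialize (Hinv (S n)).
      assert (0 < r * (v (S n) ^ 3 - v (S n))).
      { apply Rmult_lt_0_compat; [lra|]. simpl. nra. }
      lra. }
    split; [right; exact Hdec|].
    apply (geo_cv v 1 (v 0%nat - 1) (/ (1 + 2 * r))); [lra| |].
    + split; [apply Rinv_0_lt_compat; lra|].
      rewrite <- Rinv_1. apply Rinv_lt_contravar; lra.
    + intro n. induction n.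
      * simpl. rewrite Rabs_right; lra.
      * pose proof (Hinv n) as Hn. pose proof (Hinv (S n)) as Hs.
        rewrite Rabs_right in * by lra. simpl.
        assert (Hk : v n - 1 = (v (S n) - 1) * (1 + r * v (S n) * (v (S n) + 1)))
          by (rewrite (Hrec n); unfold gg; ring).
        assert ((v (S n) - 1) * (1 + 2 * r) <= v n - 1).
        { rewrite Hk. apply Rmult_le_compat_l; [lra|].
          assert (2 <= v (S n) * (v (S n) + 1)) by nra. nra. }
        assert (v (S n) - 1 <= (v n - 1) * / (1 + 2 * r)).
        { apply (Rmult_le_reg_r (1 + 2*r)); [lra|].
          rewrite Rmult_assoc, Rinv_l by lra. lra. }
        assert (0 < / (1 + 2 * r)) by (apply Rinv_0_lt_compat; lra).
        nra.
  - assert (Hlt : v 0%nat < 1) by lra.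
    assert (Hinv : forall n, 0 < v n < 1).
    { induction n; [lra|]. split; apply (gg_rev r); auto; rewrite <- Hrec;
      unfold gg; simpl; lra. }
    assert (Hinc : forall n, v n <= v (S n)).
    { intro n. rewrite (Hrec n). unfold gg. specialize (Hinv (S n)).
      assert (0 < r * (v (S n) - v (S n) ^ 3)).
      { apply Rmult_lt_0_compat; [lra|]. simpl. nra. }
      lra. }
    assert (Hge : forall n, v 0%nat <= v n).
    { induction n; [lra|]. specialize (Hinc n). lra. }
    split; [left; exact Hinc|].
    set (c := r * v 0%nat).
    assert (Hc : 0 < c) by (unfold c; nra).
    apply (geo_cv v 1 (1 - v 0%nat) (/ (1 + c))); [lra| |].
    + split; [apply Rinv_0_lt_compat; lra|].
      rewrite <- Rinv_1. apply Rinv_lt_contravar; lra.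
    + intro n. induction n.
      * simpl. rewrite Rabs_left; lra.
      * pose proof (Hinv n) as Hn. pose proof (Hinv (S n)) as Hs.
        pose proof (Hge (S n)) as Hg.
        rewrite Rabs_left in * by lra. simpl.
        assert (Hk : 1 - v n = (1 - v (S n)) * (1 + r * v (S n) * (v (S n) + 1)))
          by (rewrite (Hrec n); unfold gg; ring).
        assert ((1 - v (S n)) * (1 + c) <= 1 - v n).
        { rewrite Hk. apply Rmult_le_compat_l; [lra|]. unfold c. nra. }
        assert (1 - v (S n) <= (1 - v n) * / (1 + c)).
        { apply (Rmult_le_reg_r (1 + c)); [lra|].
          rewrite Rmult_assoc, Rinv_l by lra. lra. }
        assert (0 < / (1 + c)) by (apply Rinv_0_lt_compat; lra).
        nra.
Qed.

Theorem theorem2p4 (eps u0 h : R) (u : nat -> R) :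
  0 < eps < 1 ->
  0 < h <= eps ^ 2 ->
  u 0%nat = u0 ->
  (forall n : nat, (1 <= n)%nat ->
     (u n - u (n - 1)%nat) / h + / eps ^ 2 * (u n ^ 3 - u n) = 0) ->
  ((u0 = 0 \/ u0 = 1 \/ u0 = -1) -> forall n : nat, (1 <= n)%nat -> u n = sign u0) /\
  (~ (u0 = 0 \/ u0 = 1 \/ u0 = -1) -> monotone_seq u /\ Un_cv u (sign u0)).
Proof.
  intros He Hh Hu0 Hs.
  set (r := h / eps ^ 2).
  assert (He2 : 0 < eps ^ 2) by (simpl; nra).
  assert (Hr : 0 < r <= 1).
  { unfold r; split; [apply Rdiv_lt_0_compat; lra|].
    apply (Rmult_le_reg_r (eps^2)); auto. unfold Rdiv.
    rewrite Rmult_assoc, Rinv_l by lra. lra. }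
  assert (Hrec : forall n, u n = gg r (u (S n))).
  { intro n. specialize (Hs (S n) ltac:(lia)).
    replace (S n - 1)%nat with n in Hs by lia.
    unfold gg, r.
    assert (E : u (S n) - u n = h * ((u (S n) - u n) / h)) by (field; lra).
    replace (h / eps ^ 2 * (u (S n) ^ 3 - u (S n)))
      with (h * (/ eps ^ 2 * (u (S n) ^ 3 - u (S n)))) by (unfold Rdiv; ring).
    replace (/ eps ^ 2 * (u (S n) ^ 3 - u (S n))) with (- ((u (S n) - u n) / h)) by lra.
    lra. }
  split.
  - intros Hc.
    assert (Hfix : gg r u0 = u0) by (unfold gg; destruct Hc as [->|[->| ->]]; ring).
    assert (Hall : forall n, u n = u0).
    { induction n; auto. apply (gg_inj r); auto. rewrite <- Hrec, IHn. auto. }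
    intros n _. rewrite Hall. unfold sign.
    destruct (Rlt_dec 0 u0); destruct (Rlt_dec u0 0); lra.
  - intros Hc.
    destruct (Rtotal_order u0 0) as [Hneg|[Hz|Hpos]]; [|tauto|].
    + set (w := fun n => - u n).
      assert (Hw : forall n, w n = gg r (w (S n))).
      { intro n; unfold w, gg; rewrite (Hrec n); unfold gg; ring. }
      destruct (core w r Hr Hw) as [Hm Hcv]; unfold w; [lra|lra|].
      assert (sign u0 = -1) as -> by
        (unfold sign; destruct (Rlt_dec 0 u0); destruct (Rlt_dec u0 0); lra).
      split.
      * destruct Hm as [Hm|Hm]; [right|left]; intro n; specialize (Hm n); unfold w in Hm; lra.
      * intros e Hpe. destruct (Hcv e Hpe) as [N HN]. exists N. intros n Hn.
        specialize (HN n Hn). unfold R_dist, w in *.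
        replace (u n - -1) with (- (- u n - 1)) by ring. rewrite Rabs_Ropp. auto.
    + assert (sign u0 = 1) as -> by
        (unfold sign; destruct (Rlt_dec 0 u0); destruct (Rlt_dec u0 0); lra).
      apply (core u r Hr Hrec); rewrite Hu0; [lra|]. intro; tauto.
Qed.
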